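(* Let $n>2$ be an even integer, $a,c\in\mathbb{R}$ and $b\in\{1,-1\}$. Let $m_n(a,b,c)$ be the $(n+1)\times(n+1)$ symmetric matrix with rows/columns indexed $0,\dots,n$, $(0,0)$-entry $-nc$, $(0,j)$- and $(j,0)$-entries $b$ for $j=1,\dots,n$, and lower-right block the circulant $\mathrm{circ}(c,a,0,\dots,0,a)$ (diagonal $c$, entries $a$ at positions $(j,j')$ with $j'\equiv j\pm1\pmod n$, zeros elsewhere). Let \[\lambda_\pm(c)=\tfrac12\Bigl(2a-(n-1)c\pm\sqrt{\bigl(2a+(n+1)c\bigr)^2+4n}\Bigr),\qquad \lambda_{n/2}=c-2a,\] and, for $a\ne0$, $c_{\mathrm{trans}}=\dfrac{8a^2-n}{4(n+1)a}$. Let $\lambda_{\min}(c)$ and $\lambda_{\max}(c)$ be the smallest and largest eigenvalues of $m_n(a,b,c)$. Then: if $a<0$: $\lambda_{\min}(c)=\lambda_-(c)$, and $\lambda_{\max}(c)=\lambda_+(c)$ for $c<c_{\mathrm{trans}}$, $\lambda_{\max}(c)=c-2a$ for $c\ge c_{\mathrm{trans}}$; if $a=0$: $\lambda_{\min}(c)=\lambda_-(c)$ and $\lambda_{\max}(c)=\lambda_+(c)$; if $a>0$: $\lambda_{\min}(c)=c-2a$ for $c\le c_{\mathrm{trans}}$, $\lambda_{\min}(c)=\lambda_-(c)$ for $c>c_{\mathrm{trans}}$, and $\lambda_{\max}(c)=\lambda_+(c)$. *)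

(* Defs.v *)
From HB Require Import structures.
From mathcomp Require Import all_boot all_order all_algebra.
From mathcomp Require Import reals.
Set Implicit Arguments. Unset Strict Implicit. Unset Printing Implicit Defensive.
Import Order.TTheory GRing.Theory Num.Theory.
Local Open Scope ring_scope.

Definition circ_entry (R : ringType) (n : nat) (a c : R) (i j : nat) : R :=
  if i == j then c
  else if (j == (i.+1 %% n)%N) || (i == (j.+1 %% n)%N) then a
  else 0.

Definition m_mat (R : ringType) (n : nat) (a b c : R) : 'M[R]_(n.+1) :=
  \matrix_(i < n.+1, j < n.+1)
    if (i == 0%N :> nat) && (j == 0%N :> nat) then - (n%:R * c)
    else if (i == 0%N :> nat) || (j == 0%N :> nat) then b
    else circ_entry n a c (i.-1) (j.-1).

Definition lambda_plus (R : realType) (n : nat) (a c : R) : R :=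
  (2 * a - (n%:R - 1) * c
   + Num.sqrt ((2 * a + (n%:R + 1) * c) ^+ 2 + 4 * n%:R)) / 2.

Definition lambda_minus (R : realType) (n : nat) (a c : R) : R :=
  (2 * a - (n%:R - 1) * c
   - Num.sqrt ((2 * a + (n%:R + 1) * c) ^+ 2 + 4 * n%:R)) / 2.

Definition c_trans (R : realType) (n : nat) (a : R) : R :=
  (8 * a ^+ 2 - n%:R) / (4 * (n%:R + 1) * a).

Definition is_min_eigenvalue (R : realType) (m : nat) (A : 'M[R]_m) (x : R) :=
  eigenvalue A x /\ forall y, eigenvalue A y -> x <= y.
Definition is_max_eigenvalue (R : realType) (m : nat) (A : 'M[R]_m) (x : R) :=
  eigenvalue A x /\ forall y, eigenvalue A y -> y <= x.

(* Main.v *)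
Require Import Defs.
From HB Require Import structures.
From mathcomp Require Import all_boot all_order all_algebra.
From mathcomp Require Import reals.
From mathcomp Require Import zify ring lra.
Set Implicit Arguments. Unset Strict Implicit. Unset Printing Implicit Defensive.
Import Order.TTheory GRing.Theory Num.Theory.
Local Open Scope ring_scope.

Section Aux.
Variable R : realType.
Variable n : nat.
Hypothesis hn : (2 < n)%N.

Definition nxt (k : nat) : nat := if k.+1 == n then 0%N else k.+1.
Definition prv (k : nat) : nat := if k == 0%N then n.-1 else k.-1.

Lemma nxtE k : (k < n)%N -> (k.+1 %% n)%N = nxt k.
Proof. move=> h; rewrite /nxt; case: eqP => [->|e]; [exact: modnn| apply: modn_small; lia]. Qed.

Lemma nxt_lt k : (k < n)%N -> (nxt k < n)%N.
Proof. rewrite /nxt; case: eqP; lia. Qed.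
Lemma prv_lt k : (k < n)%N -> (prv k < n)%N.
Proof. rewrite /prv; case: eqP; lia. Qed.

Lemma sum_ind (u : nat -> R) m k : \sum_(0 <= i < k) u i * (i == m)%:R = if (m < k)%N then u m else 0.
Proof.
elim: k => [|k IH]; first by rewrite big_geq.
rewrite big_nat_recr //= IH.
case: (k =P m) => [->|e]; first by rewrite ltnn ltnSn mulr1 add0r.
rewrite mulr0 addr0 ltnS [(m <= k)%N]leq_eqVlt (_ : (m == k) = false) //.
by apply/eqP => h; apply: e; rewrite h.
Qed.

Lemma circ_dec (a c : R) i k : (i < n)%N -> (k < n)%N ->
  circ_entry n a c i k = (i == k)%:R * c + (i == nxt k)%:R * a + (i == prv k)%:R * a.
Proof.
move=> hi hk; rewrite /circ_entry (nxtE hi) (nxtE hk) /nxt /prv.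
case: (i.+1 =P n) => ?; case: (k.+1 =P n) => ?; case: (k =P 0%N) => ?;
  do !case: eqP => //= ?; try lia; ring.
Qed.

Variables a b c : R.
Local Notation M := (m_mat n a b c).
Definition uu (v : 'rV[R]_(n.+1)) (i : nat) : R := v 0 (inord i.+1).

Lemma sum_circ (v : 'rV[R]_(n.+1)) k : (k < n)%N ->
  \sum_(i < n) v 0 (lift ord0 i) * M (lift ord0 i) (inord k.+1)
  = c * uu v k + a * uu v (nxt k) + a * uu v (prv k).
Proof.
move=> hk.
transitivity (\sum_(0 <= i < n) uu v i * circ_entry n a c i k).
  rewrite big_mkord; apply: eq_bigr => i _.
  rewrite /uu mxE /= inordK; last by rewrite ltnS.
  congr (v 0 _ * _); apply: val_inj; rewrite /= inordK //; by rewrite ltnS.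
transitivity (\sum_(0 <= i < n) (c * (uu v i * (i == k)%:R) + a * (uu v i * (i == nxt k)%:R)
     + a * (uu v i * (i == prv k)%:R))).
  rewrite !big_nat; apply: eq_bigr => i /andP[_ hi]; rewrite circ_dec //; ring.
rewrite !big_split /= -!mulr_sumr !sum_ind hk nxt_lt // prv_lt //.
Qed.

Lemma colk (v : 'rV[R]_(n.+1)) k : (k < n)%N ->
  (v *m M) 0 (inord k.+1) = b * v 0 0 + (c * uu v k + a * uu v (nxt k) + a * uu v (prv k)).
Proof.
move=> hk; rewrite mxE big_ord_recl sum_circ //; congr (_ + _).
rewrite mxE /= inordK ?ltnS // mulrC.
by [].
Qed.

Lemma col0 (v : 'rV[R]_(n.+1)) :
  (v *m M) 0 0 = - (n%:R * c) * v 0 0 + b * \sum_(0 <= i < n) uu v i.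
Proof.
rewrite mxE big_ord_recl mxE /= mulrC; congr (_ + _).
rewrite big_mkord mulr_sumr; apply: eq_bigr => i _.
rewrite mxE /= mulrC /uu; congr (_ * v 0 _); apply: val_inj; rewrite /= inordK //; by rewrite ltnS.
Qed.

Lemma sum_nxt (u : nat -> R) : \sum_(0 <= k < n) u (nxt k) = \sum_(0 <= k < n) u k.
Proof.
have en : n = n.-1.+1 by lia.
rewrite [in LHS]en [in RHS]en big_nat_recr //= big_nat_recl //= addrC; congr (_ + _).
  by rewrite /nxt -en eqxx.
apply: eq_big_nat => k /andP[_ hk]; rewrite /nxt; case: eqP => //; lia.
Qed.

Lemma sum_prv (u : nat -> R) : \sum_(0 <= k < n) u (prv k) = \sum_(0 <= k < n) u k.
Proof.
have en : n = n.-1.+1 by lia.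
rewrite [in LHS]en [in RHS]en [LHS]big_nat_recl // [RHS]big_nat_recr //=.
rewrite [RHS]addrC; congr (_ + _).
all: try (apply: eq_big_nat => k /andP[_ hk]; rewrite /prv; case: eqP => //; lia).
Qed.

Lemma exists_max (f : nat -> R) m : exists k, (k <= m)%N /\ forall i, (i <= m)%N -> f i <= f k.
Proof.
elim: m => [|m [k [hk IH]]].
  by exists 0%N; split => // i; rewrite leqn0 => /eqP ->.
case: (lerP (f m.+1) (f k)) => h.
  exists k; split; first lia.
  move=> i; rewrite leq_eqVlt ltnS; case/orP => [/eqP -> //|]; exact: IH.
exists m.+1; split => // i; rewrite leq_eqVlt ltnS; case/orP => [/eqP -> //|/IH hi].
exact: le_trans hi (ltW h).
Qed.

Lemma uu_lift (v : 'rV[R]_(n.+1)) (k : 'I_n) : v 0 (lift ord0 k) = uu v k.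
Proof. rewrite /uu; congr (v 0 _); apply: val_inj; rewrite /= inordK //; by rewrite ltnS. Qed.

Definition pp (y : R) := (y + n%:R * c) * (y - c - 2 * a) - n%:R.

Lemma eig_char y : b ^+ 2 = 1 -> eigenvalue M y -> pp y = 0 \/ `|y - c| <= 2 * `|a|.
Proof.
move=> hb /eigenvalueP [v hv vn0].
set x := v 0 0; set S := \sum_(0 <= i < n) uu v i.
have e0 : - (n%:R * c) * x + b * S - y * x = 0.
  by rewrite -col0 hv mxE subrr.
have ek : forall k, (k < n)%N -> b * x + (c * uu v k + a * uu v (nxt k) + a * uu v (prv k)) = y * uu v k.
  by move=> k hk; rewrite -colk // hv mxE.
have eS : n%:R * b * x + (c + 2 * a) * S - y * S = 0.
  have : \sum_(0 <= k < n) (b * x + (c * uu v k + a * uu v (nxt k) + a * uu v (prv k)))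
       = \sum_(0 <= k < n) y * uu v k.
    by rewrite !big_nat; apply: eq_bigr => k /andP[_ hk]; rewrite ek.
  rewrite !big_split /= -!mulr_sumr sum_nxt (sum_prv (uu v)) sumr_const_nat subn0 -/S => <-.
  rewrite -mulr_natl; ring.
case: (eqVneq (pp y) 0) => hp; [by left | right].
have hx : x = 0.
  have : pp y * x = 0.
    rewrite (_ : pp y * x = (c + 2 * a - y) * (- (n%:R * c) * x + b * S - y * x)
       - b * (n%:R * b * x + (c + 2 * a) * S - y * S) + n%:R * x * (b ^+ 2 - 1)).
      by rewrite e0 eS hb subrr !mulr0 subrr addr0.
    rewrite /pp; ring.
  by move/eqP; rewrite mulf_eq0 (negPf hp) => /eqP.
have hS : S = 0.
  have : pp y * S = 0.
    rewrite (_ : pp y * S = (- (n%:R * c) - y) * (n%:R * b * x + (c + 2 * a) * S - y * S)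
       - n%:R * b * (- (n%:R * c) * x + b * S - y * x) + n%:R * S * (b ^+ 2 - 1)).
      by rewrite e0 eS hb subrr !mulr0 subrr addr0.
    rewrite /pp; ring.
  by move/eqP; rewrite mulf_eq0 (negPf hp) => /eqP.
have [m [hm hmax]] := exists_max (fun i => `|uu v i|) n.-1.
have hm' : (m < n)%N by lia.
have hmax' : forall i, (i < n)%N -> `|uu v i| <= `|uu v m|.
  by move=> i hi; apply: hmax; lia.
have hpos : 0 < `|uu v m|.
  rewrite normr_gt0; apply/negP => /eqP h0; move/negP: vn0; apply; apply/eqP.
  apply/matrixP => i j; rewrite ord1 !mxE; case: (unliftP ord0 j) => [k ->|->].
    rewrite uu_lift; have := hmax' k (ltn_ord k); rewrite h0 normr0 => hk.
    by apply/eqP; rewrite -normr_eq0 eq_le hk normr_ge0.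
  exact: hx.
have em := ek m hm'; rewrite hx mulr0 add0r in em.
have h1 : (y - c) * uu v m = a * (uu v (nxt m) + uu v (prv m)).
  apply/eqP; rewrite -subr_eq0; apply/eqP.
  rewrite (_ : _ - _ = y * uu v m - (c * uu v m + a * uu v (nxt m) + a * uu v (prv m))).
    by rewrite em subrr.
  ring.
have h2 : `|y - c| * `|uu v m| <= `|a| * (2 * `|uu v m|).
  rewrite -normrM h1 normrM ler_wpM2l //.
  apply: le_trans (ler_normD _ _) _.
  by rewrite mulr2n mulrDl mul1r lerD // hmax' // (nxt_lt, prv_lt).
nra.
Qed.

Lemma eig_vec x0 (f : nat -> R) y : f 0%N != 0 ->
  - (n%:R * c) * x0 + b * \sum_(0 <= i < n) f i = y * x0 ->
  (forall k, (k < n)%N -> b * x0 + (c * f k + a * f (nxt k) + a * f (prv k)) = y * f k) ->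
  eigenvalue M y.
Proof.
move=> f0 h0 hk.
pose v : 'rV[R]_(n.+1) := \row_(j < n.+1) (if (j == 0%N :> nat) then x0 else f j.-1).
have v0 : v 0 0 = x0 by rewrite mxE.
have vu : forall k, (k < n)%N -> uu v k = f k.
  by move=> k hk'; rewrite /uu mxE inordK.
apply/eigenvalueP; exists v.
  apply/matrixP => i j; rewrite ord1 [RHS]mxE; case: (unliftP ord0 j) => [k ->|->].
    rewrite (_ : lift ord0 k = inord k.+1); last by apply: val_inj; rewrite /= inordK // ltnS.
    rewrite colk // v0 (vu _ (ltn_ord k)) (vu _ (nxt_lt (ltn_ord k))) (vu _ (prv_lt (ltn_ord k))).
    by rewrite hk // -(vu _ (ltn_ord k)).
  rewrite col0 v0 -h0; congr (_ + b * _).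
  by rewrite !big_nat; apply: eq_bigr => l /andP[_ hl]; rewrite vu.
have h1n : (1 < n.+1)%N by lia.
apply/negP => /eqP /matrixP /(_ 0 (inord 1)); rewrite !mxE inordK //= => /eqP.
by apply/negP.
Qed.

Lemma odd_nxt k : ~~ odd n -> (k < n)%N -> odd (nxt k) = ~~ odd k.
Proof.
move=> hev hk; rewrite /nxt; case: eqP => [e|_] //.
by move: hev; rewrite -e /= negbK => ->.
Qed.

Lemma odd_prv k : ~~ odd n -> (k < n)%N -> odd (prv k) = ~~ odd k.
Proof.
move=> hev hk; rewrite /prv; case: eqP => [->|e] /=.
  have en : n = n.-1.+1 by lia.
  by move: hev; rewrite en /= negbK.
have ek : k = k.-1.+1 by lia.
by rewrite [in RHS]ek /= negbK.
Qed.

Lemma eig_alt : ~~ odd n -> eigenvalue M (c - 2 * a).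
Proof.
move=> hev; pose f := fun i : nat => if odd i then -1 else 1 : R.
have fn : forall k, (k < n)%N -> f (nxt k) = - f k.
  by move=> k hk; rewrite /f odd_nxt //; case: (odd k); rewrite ?opprK.
have fp : forall k, (k < n)%N -> f (prv k) = - f k.
  by move=> k hk; rewrite /f odd_prv //; case: (odd k); rewrite ?opprK.
apply: (@eig_vec 0 f).
- by rewrite /f /= oner_eq0.
- have : \sum_(0 <= i < n) f (nxt i) = - \sum_(0 <= i < n) f i.
    by rewrite -sumrN !big_nat; apply: eq_bigr => i /andP[_ hi]; rewrite fn.
  rewrite sum_nxt => h; rewrite (_ : \sum_(0 <= i < n) f i = 0); first by rewrite !mulr0 addr0.
  lra.
- by move=> k hk; rewrite fn // fp //; ring.
Qed.

Lemma eig_root y : b ^+ 2 = 1 -> pp y = 0 -> eigenvalue M y.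
Proof.
move=> hb hp; apply: (@eig_vec (b * (y - c - 2 * a)) (fun _ => 1)).
- exact: oner_neq0.
- rewrite sumr_const_nat subn0.
  apply/eqP; rewrite -subr_eq0; apply/eqP.
  rewrite (_ : _ - _ = - b * pp y); first by rewrite hp mulr0.
  rewrite /pp -mulr_natl; ring.
- move=> k hk; rewrite (_ : b * (b * (y - c - 2 * a)) = b ^+ 2 * (y - c - 2 * a)); last by ring.
  rewrite hb; ring.
Qed.

Definition TT := 2 * a - (n%:R - 1) * c.
Definition DD := (2 * a + (n%:R + 1) * c) ^+ 2 + 4 * n%:R.
Definition ss := Num.sqrt DD.

Lemma DD_ge0 : 0 <= DD.
Proof. rewrite /DD addr_ge0 ?sqr_ge0 // mulr_ge0 // ler0n. Qed.

Lemma ss_ge0 : 0 <= ss.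
Proof. exact: sqrtr_ge0. Qed.

Lemma pp_sq x : pp x = (x - TT / 2) ^+ 2 - ss ^+ 2 / 4.
Proof. rewrite /ss sqr_sqrtr; last exact: DD_ge0. rewrite /pp /TT /DD; field. all: done. Qed.

Lemma lp_def : lambda_plus n a c = TT / 2 + ss / 2.
Proof. rewrite /lambda_plus /TT /ss /DD; field. all: done. Qed.

Lemma lm_def : lambda_minus n a c = TT / 2 - ss / 2.
Proof. rewrite /lambda_minus /TT /ss /DD; field. all: done. Qed.

Lemma F1 x : pp x <= 0 -> lambda_minus n a c <= x /\ x <= lambda_plus n a c.
Proof.
rewrite pp_sq lp_def lm_def => h; have := ss_ge0 => hs.
set z := x - TT / 2 in h.
have hz : x = z + TT / 2 by rewrite /z; ring.
rewrite hz; split; nra.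
Qed.

Lemma F2 x : 0 <= pp x -> x <= lambda_minus n a c \/ lambda_plus n a c <= x.
Proof.
rewrite pp_sq lp_def lm_def => h; have := ss_ge0 => hs.
set z := x - TT / 2 in h.
have hz : x = z + TT / 2 by rewrite /z; ring.
rewrite hz; case: (lerP 0 z) => hz0; [right | left]; nra.
Qed.

Lemma pp_lp : pp (lambda_plus n a c) = 0.
Proof. rewrite pp_sq lp_def; field. all: done. Qed.

Lemma pp_lm : pp (lambda_minus n a c) = 0.
Proof. rewrite pp_sq lm_def; field. all: done. Qed.

Lemma main_sec : ~~ odd n -> (b = 1 \/ b = -1) ->
  [/\ a < 0 ->
        [/\ is_min_eigenvalue (m_mat n a b c) (lambda_minus n a c),
            c < c_trans n a -> is_max_eigenvalue (m_mat n a b c) (lambda_plus n a c)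
          & c_trans n a <= c -> is_max_eigenvalue (m_mat n a b c) (c - 2 * a)],
      a = 0 ->
        is_min_eigenvalue (m_mat n a b c) (lambda_minus n a c) /\
        is_max_eigenvalue (m_mat n a b c) (lambda_plus n a c)
    & 0 < a ->
        [/\ c <= c_trans n a -> is_min_eigenvalue (m_mat n a b c) (c - 2 * a),
            c_trans n a < c -> is_min_eigenvalue (m_mat n a b c) (lambda_minus n a c)
          & is_max_eigenvalue (m_mat n a b c) (lambda_plus n a c)]].
Proof.
move=> hev hb.
have hb2 : b ^+ 2 = 1.
  by case: hb => e; rewrite e; ring.
have Elm := eig_root hb2 pp_lm.
have Elp := eig_root hb2 pp_lp.
have Ec := eig_alt hev.
have hN : 3 <= n%:R :> R by rewrite (ler_nat R 3 n).
have Char : forall y, eigenvalue M y -> (lambda_minus n a c <= y /\ y <= lambda_plus n a c) \/ (c - 2 * `|a| <= y /\ y <= c + 2 * `|a|).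
  move=> y /(eig_char hb2) [h|h]; [left; apply: F1; rewrite h // | right].
  by move: h; rewrite ler_norml => /andP[h1 h2]; split; lra.
have Hc2 : lambda_minus n a c <= c + 2 * a /\ c + 2 * a <= lambda_plus n a c.
  by apply: F1; rewrite /pp; nra.
have ppc : pp (c - 2 * a) = 8 * a ^+ 2 - n%:R - c * (4 * (n%:R + 1) * a).
  by rewrite /pp; ring.
have hq : a != 0 -> c_trans n a * (4 * (n%:R + 1) * a) = 8 * a ^+ 2 - n%:R.
  move=> ha; have hN1 : n%:R + 1 != 0 :> R by apply: lt0r_neq0; lra.
  have h4 : 4 != 0 :> R by apply: lt0r_neq0; lra.
  by rewrite /c_trans divfK // !mulf_neq0.
split.
- move=> ha; have na : `|a| = - a by rewrite ltr0_norm.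
  have hq' := hq (ltr0_neq0 ha).
  have h41 : 0 < 4 * (n%:R + 1) :> R by lra.
  have hd : 4 * (n%:R + 1) * a < 0 by rewrite pmulr_rlt0.
  split.
  + split => // y /Char [[h1 h2]|[h1 h2]] //; try rewrite na in h1 h2; lra.
  + move=> hc; have hp : pp (c - 2 * a) <= 0.
      by rewrite ppc -hq' -mulrBl mulr_ge0_le0 // ?subr_ge0 ltW.
    have [_ H] := F1 hp.
    split => // y /Char [[h1 h2]|[h1 h2]] //; try rewrite na in h1 h2; lra.
  + move=> hc; have hp : 0 <= pp (c - 2 * a).
      by rewrite ppc -hq' -mulrBl mulr_le0 // ?subr_le0 // ltW.
    have H : lambda_plus n a c <= c - 2 * a by case: (F2 hp) => // h; lra.
    split => // y /Char [[h1 h2]|[h1 h2]] //; try rewrite na in h1 h2; lra.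
- move=> ha; have na : `|a| = 0 by rewrite ha normr0.
  split.
    split => // y /Char [[h1 h2]|[h1 h2]] //; try rewrite na in h1 h2; lra.
  split => // y /Char [[h1 h2]|[h1 h2]] //; try rewrite na in h1 h2; lra.
- move=> ha; have na : `|a| = a by rewrite gtr0_norm.
  have hq' := hq (lt0r_neq0 ha).
  have h41 : 0 < 4 * (n%:R + 1) :> R by lra.
  have hd : 0 < 4 * (n%:R + 1) * a by rewrite mulr_gt0.
  split.
  + move=> hc; have hp : 0 <= pp (c - 2 * a).
      by rewrite ppc -hq' -mulrBl mulr_ge0 // ?subr_ge0 // ltW.
    have H : c - 2 * a <= lambda_minus n a c by case: (F2 hp) => // h; lra.
    split => // y /Char [[h1 h2]|[h1 h2]] //; try rewrite na in h1 h2; lra.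
  + move=> hc; have hp : pp (c - 2 * a) <= 0.
      by rewrite ppc -hq' -mulrBl mulr_le0_ge0 // ?subr_le0 ltW.
    have [H _] := F1 hp.
    split => // y /Char [[h1 h2]|[h1 h2]] //; try rewrite na in h1 h2; lra.
  + split => // y /Char [[h1 h2]|[h1 h2]] //; try rewrite na in h1 h2; lra.
Qed.

End Aux.

Unset Implicit Arguments.

Theorem theorem6 (R : realType) (n : nat) (a b c : R) :
  (2 < n)%N -> ~~ odd n -> (b = 1 \/ b = -1) ->
  [/\ a < 0 ->
        [/\ is_min_eigenvalue (m_mat n a b c) (lambda_minus n a c),
            c < c_trans n a -> is_max_eigenvalue (m_mat n a b c) (lambda_plus n a c)
          & c_trans n a <= c -> is_max_eigenvalue (m_mat n a b c) (c - 2 * a)],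
      a = 0 ->
        is_min_eigenvalue (m_mat n a b c) (lambda_minus n a c) /\
        is_max_eigenvalue (m_mat n a b c) (lambda_plus n a c)
    & 0 < a ->
        [/\ c <= c_trans n a -> is_min_eigenvalue (m_mat n a b c) (c - 2 * a),
            c_trans n a < c -> is_min_eigenvalue (m_mat n a b c) (lambda_minus n a c)
          & is_max_eigenvalue (m_mat n a b c) (lambda_plus n a c)]].
Proof.
move=> hn; exact: (@main_sec R n hn a b c).
Qed.
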